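(* There exist no cones in $\mathbb{R}^3$ with proper biharmonic Gauss map. That is, for every curve $\sigma:I\to\mathbb{S}^2$ parametrized by arc length, the Gauss map of the cone $(0,\infty)\times I\to\mathbb{R}^3$, $(t,s)\mapsto t\,\sigma(s)$, is not proper biharmonic.
   Context: The cone over $\sigma$ is an immersed surface in $\mathbb{R}^3$ with induced metric $dt^2+t^2ds^2$, oriented by the unit normal $N(s)$ of $\sigma$ in $\mathbb{S}^2$. Its Gauss map sends a point to its oriented tangent plane in the Grassmannian of oriented 2-planes in $\mathbb{R}^3$ with the standard metric (identify $T_PG=P^*\otimes P^\perp$, declaring $\{e_i^*\otimes e_3\}$ orthonormal). A map with tension field $\tau(\phi)=\operatorname{trace}\nabla d\phi$ is biharmonic if $-\Delta\tau(\phi)-\operatorname{trace}R^N(d\phi,\tau(\phi))d\phi=0$ ($\Delta=-\operatorname{trace}(\nabla^\phi)^2$, $R^N(X,Y)=\nabla_X\nabla_Y-\nabla_Y\nabla_X-\nabla_{[X,Y]}$), harmonic if $\tau(\phi)=0$, and proper biharmonic if biharmonic but not harmonic. *)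

(* Defs.v *)
From Stdlib Require Import Reals.
From Coquelicot Require Import Coquelicot.
Open Scope R_scope.

Definition vec3 := (R * R * R)%type.
Definition vx (u : vec3) : R := fst (fst u).
Definition vy (u : vec3) : R := snd (fst u).
Definition vz (u : vec3) : R := snd u.
Definition mkv (a b c : R) : vec3 := (a, b, c).
Definition vzero : vec3 := mkv 0 0 0.
Definition vadd (u v : vec3) : vec3 := mkv (vx u + vx v) (vy u + vy v) (vz u + vz v).
Definition vscal (k : R) (u : vec3) : vec3 := mkv (k * vx u) (k * vy u) (k * vz u).
Definition vsub (u v : vec3) : vec3 := vadd u (vscal (-1) v).
Definition vdot (u v : vec3) : R := vx u * vx v + vy u * vy v + vz u * vz v.
Definition vnorm (u : vec3) : R := sqrt (vdot u u).
Definition vcross (u v : vec3) : vec3 :=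
  mkv (vy u * vz v - vz u * vy v) (vz u * vx v - vx u * vz v) (vx u * vy v - vy u * vx v).

Definition sum2 (f : nat -> R) : R := f 0%nat + f 1%nat.
Definition vsum2 (f : nat -> vec3) : vec3 := vadd (f 0%nat) (f 1%nat).

Definition vderiv (c : R -> vec3) (s : R) : vec3 :=
  mkv (Derive (fun u => vx (c u)) s) (Derive (fun u => vy (c u)) s)
      (Derive (fun u => vz (c u)) s).

Definition in_open_int (a b : Rbar) (s : R) : Prop := Rbar_lt a s /\ Rbar_lt s b.
Definition smooth_on (a b : Rbar) (f : R -> R) : Prop :=
  forall (k : nat) (s : R), in_open_int a b s -> ex_derive (Derive_n f k) s.
Definition smooth_curve (a b : Rbar) (c : R -> vec3) : Prop :=
  smooth_on a b (fun u => vx (c u)) /\ smooth_on a b (fun u => vy (c u)) /\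
  smooth_on a b (fun u => vz (c u)).

Definition pt := (R * R)%type.
Definition pd (i : nat) (f : pt -> R) (p : pt) : R :=
  match i with
  | O => Derive (fun x => f (x, snd p)) (fst p)
  | _ => Derive (fun y => f (fst p, y)) (snd p)
  end.
Definition vpd (i : nat) (F : pt -> vec3) (p : pt) : vec3 :=
  mkv (pd i (fun q => vx (F q)) p) (pd i (fun q => vy (F q)) p)
      (pd i (fun q => vz (F q)) p).

Definition imetric (X : pt -> vec3) (i j : nat) (p : pt) : R :=
  vdot (vpd i X p) (vpd j X p).
Definition idet (X : pt -> vec3) (p : pt) : R :=
  imetric X 0 0 p * imetric X 1 1 p - imetric X 0 1 p * imetric X 1 0 p.
Definition iinv (X : pt -> vec3) (i j : nat) (p : pt) : R :=
  match i, j with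
  | O, O => imetric X 1 1 p / idet X p
  | S _, S _ => imetric X 0 0 p / idet X p
  | O, S _ => - imetric X 0 1 p / idet X p
  | S _, O => - imetric X 1 0 p / idet X p
  end.
Definition christ (X : pt -> vec3) (k i j : nat) (p : pt) : R :=
  / 2 * sum2 (fun l => iinv X k l p *
     (pd i (imetric X j l) p + pd j (imetric X i l) p - pd l (imetric X i j) p)).

(** * Target: the Grassmannian of oriented 2-planes, identified isometrically
    with the unit sphere S^2 ⊂ R^3 via the oriented unit normal. *)
Definition tproj (y w : vec3) : vec3 := vsub w (vscal (vdot w y) y).
(** Riemann curvature of S^2, convention R(X,Y)=∇_X∇_Y-∇_Y∇_X-∇_[X,Y] *)
Definition RS2 (x y z : vec3) : vec3 := vsub (vscal (vdot y z) x) (vscal (vdot x z) y).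

Definition pconn (phi : pt -> vec3) (i : nat) (V : pt -> vec3) (p : pt) : vec3 :=
  tproj (phi p) (vpd i V p).

Definition tension (X phi : pt -> vec3) (p : pt) : vec3 :=
  vsum2 (fun i => vsum2 (fun j => vscal (iinv X i j p)
    (vsub (pconn phi i (vpd j phi) p)
          (vsum2 (fun k => vscal (christ X k i j p) (vpd k phi p)))))).

(** trace (∇^phi)^2 V  (= - Delta V) *)
Definition trace_hess (X phi : pt -> vec3) (V : pt -> vec3) (p : pt) : vec3 :=
  vsum2 (fun i => vsum2 (fun j => vscal (iinv X i j p)
    (vsub (pconn phi i (pconn phi j V) p)
          (vsum2 (fun k => vscal (christ X k i j p) (pconn phi k V p)))))).

Definition bitension (X phi : pt -> vec3) (p : pt) : vec3 :=
  vsub (trace_hess X phi (tension X phi) p)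
       (vsum2 (fun i => vsum2 (fun j => vscal (iinv X i j p)
          (RS2 (vpd i phi p) (tension X phi p) (vpd j phi p))))).

Definition harmonic (D : pt -> Prop) (X phi : pt -> vec3) : Prop :=
  forall p, D p -> tension X phi p = vzero.
Definition biharmonic (D : pt -> Prop) (X phi : pt -> vec3) : Prop :=
  forall p, D p -> bitension X phi p = vzero.
Definition proper_biharmonic (D : pt -> Prop) (X phi : pt -> vec3) : Prop :=
  biharmonic D X phi /\ ~ harmonic D X phi.

Definition gauss_map (X : pt -> vec3) (p : pt) : vec3 :=
  vscal (/ vnorm (vcross (vpd 0 X p) (vpd 1 X p))) (vcross (vpd 0 X p) (vpd 1 X p)).

Definition cone (sigma : R -> vec3) (p : pt) : vec3 := vscal (fst p) (sigma (snd p)).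
Definition cone_dom (a b : Rbar) (p : pt) : Prop := 0 < fst p /\ in_open_int a b (snd p).

(* Main.v *)
Require Import Defs.
From Stdlib Require Import Reals Lra Lia.
From Coquelicot Require Import Coquelicot.
Open Scope R_scope.

Lemma vext (u v : vec3) : vx u = vx v -> vy u = vy v -> vz u = vz v -> u = v.
Proof. destruct u as [[x y] z], v as [[x' y'] z']; unfold vx, vy, vz; simpl; congruence. Qed.


Ltac vunf := unfold tproj, RS2, vdot, vcross, vsub, vadd, vscal, vzero, mkv, vx, vy, vz; cbn [fst snd].
Ltac vring := apply vext; vunf; ring.
Ltac vfield := apply vext; vunf; field.
Lemma frame_dec u v w : vdot u u = 1 -> vdot v v = 1 -> vdot u v = 0 ->
  w = vadd (vadd (vscal (vdot w u) u) (vscal (vdot w v) v)) (vscal (vdot w (vcross u v)) (vcross u v)).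
Proof.
 intros Huu Hvv Huv.
 set (n := vcross u v).
 set (r := vsub (vsub w (vscal (vdot w u) u)) (vscal (vdot w v) v)).
 assert (H1: vdot u r = 0).
 { transitivity (vdot w u - vdot w u * vdot u u - vdot w v * vdot u v).
   unfold r; vunf; ring. rewrite Huu, Huv; ring. }
 assert (H2: vdot v r = 0).
 { transitivity (vdot w v - vdot w u * vdot u v - vdot w v * vdot v v).
   unfold r; vunf; ring. rewrite Hvv, Huv; ring. }
 assert (Hnn: vdot n n = 1).
 { transitivity (vdot u u * vdot v v - vdot u v * vdot u v).
   unfold n; vunf; ring. rewrite Huu, Hvv, Huv; ring. }
 assert (Hcr: vcross n r = vzero).
 { transitivity (vsub (vscal (vdot u r) v) (vscal (vdot v r) u)).
   unfold n; vring. rewrite H1, H2; vring. }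
 assert (Hid: vcross n (vcross n r) = vsub (vscal (vdot n r) n) (vscal (vdot n n) r)) by vring.
 assert (Hnr: vdot n r = vdot w n).
 { transitivity (vdot w n - vdot w u * vdot u n - vdot w v * vdot v n).
   unfold r; vunf; ring.
   replace (vdot u n) with 0 by (unfold n; vunf; ring).
   replace (vdot v n) with 0 by (unfold n; vunf; ring). ring. }
 rewrite Hcr, Hnr, Hnn in Hid.
 assert (Hx := f_equal vx Hid). assert (Hy := f_equal vy Hid). assert (Hz := f_equal vz Hid).
 unfold r in Hx, Hy, Hz. unfold vcross, vsub, vadd, vscal, vzero, mkv, vx, vy, vz in Hx, Hy, Hz; cbn [fst snd] in Hx, Hy, Hz.
 apply vext; unfold vsub, vadd, vscal, mkv, vx, vy, vz; cbn [fst snd]; nra.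
Qed.

Lemma loc_I a b s : in_open_int a b s -> locally s (in_open_int a b).
Proof. intros [H1 H2]. apply locally_interval with a b; auto. intros; split; auto. Qed.

Lemma Dn_ext_I a b u v k s: in_open_int a b s -> (forall y, in_open_int a b y -> u y = v y) ->
  Derive_n u k s = Derive_n v k s.
Proof. intros Hs H. apply Derive_n_ext_loc. apply filter_imp with (in_open_int a b); auto. apply loc_I; auto. Qed.

Lemma exd_ext_I a b u v k s: in_open_int a b s -> (forall y, in_open_int a b y -> u y = v y) ->
  ex_derive (Derive_n u k) s -> ex_derive (Derive_n v k) s.
Proof. intros Hs H. apply ex_derive_ext_loc. apply filter_imp with (in_open_int a b); [|apply loc_I; auto].
 intros y Hy. apply Dn_ext_I with a b; auto. Qed.

Lemma Dn_S u k x : Derive_n u (S k) x = Derive_n (Derive u) k x.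
Proof. symmetry. change (Derive_n (Derive_n u 1) k x = Derive_n u (S k) x).
 rewrite Derive_n_comp. f_equal. lia. Qed.

Definition Ck (a b : Rbar) (u : R -> R) (k : nat) := forall j, (j <= k)%nat ->
  forall y, in_open_int a b y -> ex_derive (Derive_n u j) y.

Lemma Ck_D a b u k : Ck a b u (S k) -> Ck a b (Derive u) k.
Proof. intros H j Hj y Hy. apply ex_derive_ext with (Derive_n u (S j)).
 intros; apply Dn_S. apply H; auto; lia. Qed.

Lemma Ck_W a b u k : Ck a b u (S k) -> Ck a b u k.
Proof. intros H j Hj y Hy. apply H; auto; lia. Qed.

Lemma Ck_plus a b k : forall u v, Ck a b u k -> Ck a b v k -> Ck a b (fun x => u x + v x) k.
Proof.
 induction k; intros u v Hu Hv j Hj y Hy.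
 - assert (j = 0%nat) by lia; subst. simpl. apply (ex_derive_plus u v); [apply (Hu 0%nat)|apply (Hv 0%nat)]; auto.
 - destruct j as [|j].
   + simpl. apply (ex_derive_plus u v); [apply (Hu 0%nat)|apply (Hv 0%nat)]; auto; lia.
   + apply ex_derive_ext with (Derive_n (Derive (fun x => u x + v x)) j). intros; symmetry; apply Dn_S.
     apply exd_ext_I with a b (fun x => Derive u x + Derive v x); auto.
     * intros z Hz. symmetry. apply Derive_plus; [apply (Hu 0%nat)|apply (Hv 0%nat)]; auto; lia.
     * apply IHk; try apply Ck_D; auto. lia.
Qed.

Lemma Ck_mult a b k : forall u v, Ck a b u k -> Ck a b v k -> Ck a b (fun x => u x * v x) k.
Proof.
 induction k; intros u v Hu Hv j Hj y Hy.
 - assert (j = 0%nat) by lia; subst. simpl. apply (ex_derive_mult u v); [apply (Hu 0%nat)|apply (Hv 0%nat)]; auto.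
 - destruct j as [|j].
   + simpl. apply (ex_derive_mult u v); [apply (Hu 0%nat)|apply (Hv 0%nat)]; auto; lia.
   + apply ex_derive_ext with (Derive_n (Derive (fun x => u x * v x)) j). intros; symmetry; apply Dn_S.
     apply exd_ext_I with a b (fun x => Derive u x * v x + u x * Derive v x); auto.
     * intros z Hz. symmetry. apply Derive_mult; [apply (Hu 0%nat)|apply (Hv 0%nat)]; auto; lia.
     * refine (Ck_plus a b k _ _ _ _ j _ y Hy).
       -- apply IHk. apply Ck_D; exact Hu. apply Ck_W; exact Hv.
       -- apply IHk. apply Ck_W; exact Hu. apply Ck_D; exact Hv.
       -- lia.
Qed.

Lemma sm_Ck a b u : smooth_on a b u <-> forall k, Ck a b u k.
Proof. split. intros H k j _ y Hy; apply H; auto. intros H k s Hs; apply (H k k); auto. Qed.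

Lemma sm_plus a b u v : smooth_on a b u -> smooth_on a b v -> smooth_on a b (fun x => u x + v x).
Proof. rewrite !sm_Ck; intros; apply Ck_plus; auto. Qed.
Lemma sm_mult a b u v : smooth_on a b u -> smooth_on a b v -> smooth_on a b (fun x => u x * v x).
Proof. rewrite !sm_Ck; intros; apply Ck_mult; auto. Qed.
Lemma sm_D a b u : smooth_on a b u -> smooth_on a b (Derive u).
Proof. rewrite !sm_Ck; intros H k; apply Ck_D; auto. Qed.
Lemma sm_ext a b u v : (forall x, u x = v x) -> smooth_on a b u -> smooth_on a b v.
Proof. intros E H k s Hs. apply ex_derive_ext with (Derive_n u k). intros; apply Derive_n_ext; auto. apply H; auto. Qed.
Lemma sm_const a b c : smooth_on a b (fun _ => c).
Proof. intros k s Hs. destruct k. simpl. apply ex_derive_const.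
 apply ex_derive_ext with (fun _ => 0). intros; symmetry; apply Derive_n_const. apply ex_derive_const. Qed.
Lemma sm_opp a b u : smooth_on a b u -> smooth_on a b (fun x => - u x).
Proof. intros H. apply sm_ext with (fun x => (-1) * u x). intros; ring. apply sm_mult; auto. apply sm_const. Qed.
Lemma sm_minus a b u v : smooth_on a b u -> smooth_on a b v -> smooth_on a b (fun x => u x - v x).
Proof. intros. apply sm_ext with (fun x => u x + - v x). intros; ring. apply sm_plus; auto. apply sm_opp; auto. Qed.
Lemma isd_mult (f g : R -> R) x df dg : is_derive f x df -> is_derive g x dg ->
  is_derive (fun y => f y * g y) x (df * g x + f x * dg).
Proof. intros H1 H2. exact (is_derive_mult f g x df dg H1 H2 Rmult_comm). Qed.
Lemma isd_plus (f g : R -> R) x df dg : is_derive f x df -> is_derive g x dg ->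
  is_derive (fun y => f y + g y) x (df + dg).
Proof. intros H1 H2. exact (is_derive_plus f g x df dg H1 H2). Qed.
Lemma isd_minus (f g : R -> R) x df dg : is_derive f x df -> is_derive g x dg ->
  is_derive (fun y => f y - g y) x (df - dg).
Proof. intros H1 H2. exact (is_derive_minus f g x df dg H1 H2). Qed.
Lemma isd_const (c x : R) : is_derive (fun _ => c) x 0.
Proof. exact (is_derive_const c x). Qed.

Lemma isd_eq (f : R -> R) s l l' : is_derive f s l -> l = l' -> is_derive f s l'.
Proof. intros H E; subst; auto. Qed.

Ltac req := match goal with |- @eq _ ?a ?b => change (@eq R a b) end.
Definition vder (c : R -> vec3) (s : R) (v : vec3) : Prop :=
  is_derive (fun u => vx (c u)) s (vx v) /\ is_derive (fun u => vy (c u)) s (vy v) /\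
  is_derive (fun u => vz (c u)) s (vz v).

Lemma vder_deriv c s v : vder c s v -> vderiv c s = v.
Proof. intros [H1 [H2 H3]]. unfold vderiv. apply vext; unfold mkv, vx at 1, vy at 1, vz at 1; cbn [fst snd];
 apply is_derive_unique; auto. Qed.

Lemma vder_add c1 c2 s v1 v2 : vder c1 s v1 -> vder c2 s v2 ->
  vder (fun u => vadd (c1 u) (c2 u)) s (vadd v1 v2).
Proof. intros [H1 [H2 H3]] [G1 [G2 G3]]. split; [|split].
 exact (isd_plus (fun u => vx (c1 u)) (fun u => vx (c2 u)) s _ _ H1 G1).
 exact (isd_plus (fun u => vy (c1 u)) (fun u => vy (c2 u)) s _ _ H2 G2).
 exact (isd_plus (fun u => vz (c1 u)) (fun u => vz (c2 u)) s _ _ H3 G3).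
Qed.

Lemma vder_scal (r : R -> R) c s r' v : is_derive r s r' -> vder c s v ->
  vder (fun u => vscal (r u) (c u)) s (vadd (vscal r' (c s)) (vscal (r s) v)).
Proof. intros Hr [H1 [H2 H3]]. split; [|split].
 exact (isd_mult r (fun u => vx (c u)) s _ _ Hr H1).
 exact (isd_mult r (fun u => vy (c u)) s _ _ Hr H2).
 exact (isd_mult r (fun u => vz (c u)) s _ _ Hr H3).
Qed.

Lemma vder_cross c1 c2 s v1 v2 : vder c1 s v1 -> vder c2 s v2 ->
  vder (fun u => vcross (c1 u) (c2 u)) s (vadd (vcross v1 (c2 s)) (vcross (c1 s) v2)).
Proof. intros [H1 [H2 H3]] [G1 [G2 G3]]. split; [|split].
 - eapply isd_eq.
   exact (isd_minus _ _ s _ _ (isd_mult (fun u => vy (c1 u)) (fun u => vz (c2 u)) s _ _ H2 G3)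
                              (isd_mult (fun u => vz (c1 u)) (fun u => vy (c2 u)) s _ _ H3 G2)).
   cbv beta; req; vunf; ring.
 - eapply isd_eq.
   exact (isd_minus _ _ s _ _ (isd_mult (fun u => vz (c1 u)) (fun u => vx (c2 u)) s _ _ H3 G1)
                              (isd_mult (fun u => vx (c1 u)) (fun u => vz (c2 u)) s _ _ H1 G3)).
   cbv beta; req; vunf; ring.
 - eapply isd_eq.
   exact (isd_minus _ _ s _ _ (isd_mult (fun u => vx (c1 u)) (fun u => vy (c2 u)) s _ _ H1 G2)
                              (isd_mult (fun u => vy (c1 u)) (fun u => vx (c2 u)) s _ _ H2 G1)).
   cbv beta; req; vunf; ring.
Qed.

Lemma isd_dot c1 c2 s v1 v2 : vder c1 s v1 -> vder c2 s v2 ->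
  is_derive (fun u => vdot (c1 u) (c2 u)) s (vdot v1 (c2 s) + vdot (c1 s) v2).
Proof. intros [H1 [H2 H3]] [G1 [G2 G3]].
 eapply isd_eq.
 exact (isd_plus _ _ s _ _ (isd_plus _ _ s _ _ (isd_mult (fun u => vx (c1 u)) (fun u => vx (c2 u)) s _ _ H1 G1)
                              (isd_mult (fun u => vy (c1 u)) (fun u => vy (c2 u)) s _ _ H2 G2))
                              (isd_mult (fun u => vz (c1 u)) (fun u => vz (c2 u)) s _ _ H3 G3)).
 cbv beta; req; vunf; ring.
Qed.

Lemma vder_ext a b c d s v : in_open_int a b s -> (forall y, in_open_int a b y -> c y = d y) ->
  vder c s v -> vder d s v.
Proof. intros Hs E [H1 [H2 H3]].
 assert (L : locally s (fun y => c y = d y)).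
 { apply filter_imp with (in_open_int a b); auto. apply loc_I; auto. }
 split; [|split]; (eapply is_derive_ext_loc; [|eassumption]);
  (apply filter_imp with (fun y => c y = d y); [intros y Hy; rewrite Hy; reflexivity|exact L]).
Qed.

Lemma vder_sm a b c s : in_open_int a b s -> smooth_curve a b c -> vder c s (vderiv c s).
Proof. intros Hs [H1 [H2 H3]]. split; [|split].
 exact (Derive_correct _ _ (H1 0%nat s Hs)).
 exact (Derive_correct _ _ (H2 0%nat s Hs)).
 exact (Derive_correct _ _ (H3 0%nat s Hs)). Qed.

Lemma deriv0 a b f c s l : in_open_int a b s -> (forall y, in_open_int a b y -> f y = c) ->
  is_derive f s l -> l = 0.
Proof. intros Hs E H.
 assert (H0 : is_derive f s 0).
 { eapply is_derive_ext_loc; [|apply (isd_const c s)].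
   apply filter_imp with (in_open_int a b); [|apply loc_I; auto]. intros; symmetry; auto. }
 rewrite <- (is_derive_unique _ _ _ H), <- (is_derive_unique _ _ _ H0). reflexivity.
Qed.

Definition Sep (r : R -> R) (V : R -> vec3) : pt -> vec3 := fun q => vscal (r (fst q)) (V (snd q)).

Lemma vpd0_sep r V t s r' : is_derive r t r' -> vpd 0 (Sep r V) (t, s) = vscal r' (V s).
Proof. intros Hr. unfold vpd, pd, Sep; cbn [fst snd]. apply vext; unfold vscal, mkv, vx at 1, vy at 1, vz at 1; cbn [fst snd];
 apply is_derive_unique; (eapply isd_eq; [apply (isd_mult r (fun _ => _) t _ _ Hr (isd_const _ t))| cbv beta; req; vunf; ring]). Qed.

Lemma vpd1_sep r V t s V' : vder V s V' -> vpd 1 (Sep r V) (t, s) = vscal (r t) V'.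
Proof. intros [H1 [H2 H3]]. unfold vpd, pd, Sep; cbn [fst snd]. apply vext.
 - transitivity (r t * Derive (fun y => vx (V y)) s). rewrite <- Derive_scal; reflexivity.
   replace (Derive (fun y => vx (V y)) s) with (vx V') by (symmetry; apply is_derive_unique; exact H1); reflexivity.
 - transitivity (r t * Derive (fun y => vy (V y)) s). rewrite <- Derive_scal; reflexivity.
   replace (Derive (fun y => vy (V y)) s) with (vy V') by (symmetry; apply is_derive_unique; exact H2); reflexivity.
 - transitivity (r t * Derive (fun y => vz (V y)) s). rewrite <- Derive_scal; reflexivity.
   replace (Derive (fun y => vz (V y)) s) with (vz V') by (symmetry; apply is_derive_unique; exact H3); reflexivity.
Qed.

Lemma loc_pos t : 0 < t -> locally t (fun x => 0 < x).
Proof. intros H. apply locally_interval with (Finite 0) p_infty; simpl; auto. Qed.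

Lemma pd_ext a b i (f g : pt -> R) p : (forall q, cone_dom a b q -> f q = g q) -> cone_dom a b p ->
  pd i f p = pd i g p.
Proof. intros E [Ht Hs]. destruct p as [t s]; cbn [fst snd] in *. destruct i; cbn [pd fst snd].
 - apply Derive_ext_loc. apply filter_imp with (fun x => 0 < x); [|apply loc_pos; auto].
   intros x Hx; apply E; split; auto.
 - apply Derive_ext_loc. apply filter_imp with (in_open_int a b); [|apply loc_I; auto].
   intros y Hy; apply E; split; auto.
Qed.

Lemma vpd_ext a b i (F G : pt -> vec3) p : (forall q, cone_dom a b q -> F q = G q) -> cone_dom a b p ->
  vpd i F p = vpd i G p.
Proof. intros E Hp. unfold vpd. f_equal; apply pd_ext with a b; auto; intros q Hq; rewrite E; auto. Qed.

Lemma pd0_fst r t s r' : is_derive r t r' -> pd 0 (fun q => r (fst q)) (t, s) = r'.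
Proof. intros H. cbn [pd fst snd]. apply is_derive_unique; auto. Qed.
Lemma pd1_fst r t s : pd 1 (fun q => r (fst q)) (t, s) = 0.
Proof. cbn [pd fst snd]. apply Derive_const. Qed.

Definition Tg (sg : R -> vec3) := vderiv sg.
Definition Ag sg := vderiv (Tg sg).
Definition Ng sg s := vcross (sg s) (Tg sg s).
Definition kap sg s := vdot (Ag sg s) (Ng sg s).
Definition k1 sg := Derive (kap sg).
Definition k2 sg := Derive (k1 sg).
Definition k3 sg := Derive (k2 sg).
Definition Nd sg s := vscal (- kap sg s) (Tg sg s).
Definition W sg s := vadd (vscal (kap sg s) (sg s)) (vscal (- k1 sg s) (Tg sg s)).
Definition U sg s := vadd (vscal (2 * k1 sg s) (sg s)) (vscal (kap sg s - k2 sg s) (Tg sg s)).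
Definition Yv sg s := vadd (vscal (3 * k2 sg s - kap sg s) (sg s)) (vscal (3 * k1 sg s - k3 sg s) (Tg sg s)).

Lemma vder_eq c s v v' : vder c s v -> v = v' -> vder c s v'.
Proof. intros H E; subst; auto. Qed.

Lemma smT a b sg : smooth_curve a b sg -> smooth_curve a b (Tg sg).
Proof. intros [H1 [H2 H3]]. split; [|split].
 change (smooth_on a b (Derive (fun u => vx (sg u)))); apply sm_D; auto.
 change (smooth_on a b (Derive (fun u => vy (sg u)))); apply sm_D; auto.
 change (smooth_on a b (Derive (fun u => vz (sg u)))); apply sm_D; auto.
Qed.

Lemma sm_kap a b sg : smooth_curve a b sg -> smooth_on a b (kap sg).
Proof. intros H. assert (HT := smT a b sg H). assert (HA : smooth_curve a b (Ag sg)) by (apply smT; auto).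
 destruct H as [S1 [S2 S3]], HT as [T1 [T2 T3]], HA as [A1 [A2 A3]].
 eapply sm_ext with (fun u => vx (Ag sg u) * (vy (sg u) * vz (Tg sg u) - vz (sg u) * vy (Tg sg u))
   + vy (Ag sg u) * (vz (sg u) * vx (Tg sg u) - vx (sg u) * vz (Tg sg u))
   + vz (Ag sg u) * (vx (sg u) * vy (Tg sg u) - vy (sg u) * vx (Tg sg u))).
 intros; reflexivity.
 apply sm_plus; [apply sm_plus|]; apply sm_mult; try exact A1; try exact A2; try exact A3; apply sm_minus; apply sm_mult; assumption.
Qed.

Section X. End X.

Lemma isd_k a b sg s : smooth_curve a b sg -> in_open_int a b s ->
  is_derive (kap sg) s (k1 sg s) /\ is_derive (k1 sg) s (k2 sg s) /\ is_derive (k2 sg) s (k3 sg s).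
Proof. intros H Hs. assert (K := sm_kap a b sg H).
 split; [|split]; apply Derive_correct.
 apply (K 0%nat s Hs). apply (K 1%nat s Hs). apply (K 2%nat s Hs).
Qed.

Lemma norm1 u : vnorm u = 1 -> vdot u u = 1.
Proof. unfold vnorm; intros H. assert (0 <= vdot u u) by (unfold vdot; nra).
 rewrite <- (sqrt_sqrt _ H0), H; ring. Qed.

Section Frame.
End Frame.

Lemma frame_facts a b sg s : smooth_curve a b sg ->
  (forall s, in_open_int a b s -> vnorm (sg s) = 1) ->
  (forall s, in_open_int a b s -> vnorm (vderiv sg s) = 1) -> in_open_int a b s ->
  vdot (sg s) (sg s) = 1 /\ vdot (Tg sg s) (Tg sg s) = 1 /\ vdot (sg s) (Tg sg s) = 0 /\
  vdot (Tg sg s) (Ag sg s) = 0 /\ vdot (sg s) (Ag sg s) = -1.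
Proof. intros Hsm Hn1 Hn2 Hs.
 assert (Ds : forall y, in_open_int a b y -> vder sg y (Tg sg y)) by (intros; apply vder_sm with a b; auto).
 assert (DT : forall y, in_open_int a b y -> vder (Tg sg) y (Ag sg y)) by (intros; apply vder_sm with a b; auto; apply smT; auto).
 assert (Hss : forall y, in_open_int a b y -> vdot (sg y) (sg y) = 1) by (intros; apply norm1; auto).
 assert (HTT : forall y, in_open_int a b y -> vdot (Tg sg y) (Tg sg y) = 1) by (intros; apply norm1; apply Hn2; auto).
 assert (HsT : forall y, in_open_int a b y -> vdot (sg y) (Tg sg y) = 0).
 { intros y Hy. assert (L := deriv0 a b _ 1 y _ Hy Hss (isd_dot _ _ y _ _ (Ds y Hy) (Ds y Hy))).
   replace (vdot (Tg sg y) (sg y)) with (vdot (sg y) (Tg sg y)) in L by (unfold vdot; ring). lra. }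
 split; [|split; [|split; [|split]]]; auto.
 - assert (L := deriv0 a b _ 1 s _ Hs HTT (isd_dot _ _ s _ _ (DT s Hs) (DT s Hs))).
   replace (vdot (Ag sg s) (Tg sg s)) with (vdot (Tg sg s) (Ag sg s)) in L by (unfold vdot; ring). lra.
 - assert (L := deriv0 a b _ 0 s _ Hs HsT (isd_dot _ _ s _ _ (Ds s Hs) (DT s Hs))).
   rewrite HTT in L; auto. lra.
Qed.

Lemma tproj_frame u v al be ga : vdot u u = 1 -> vdot v v = 1 -> vdot u v = 0 ->
  tproj (vcross u v) (vadd (vadd (vscal al u) (vscal be v)) (vscal ga (vcross u v))) =
  vadd (vscal al u) (vscal be v).
Proof. intros Huu Hvv Huv. unfold tproj.
 replace (vdot (vadd (vadd (vscal al u) (vscal be v)) (vscal ga (vcross u v))) (vcross u v)) with ga.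
 vring.
 transitivity (ga * (vdot u u * vdot v v - vdot u v * vdot u v)).
 rewrite Huu, Hvv, Huv; ring. vunf; ring.
Qed.

Definition Hyps a b sg := smooth_curve a b sg /\ (forall s, in_open_int a b s -> vnorm (sg s) = 1) /\
  (forall s, in_open_int a b s -> vnorm (vderiv sg s) = 1).

Ltac ffacts H Hs := let a := fresh "ss" in let b := fresh "TT" in let c := fresh "sT" in
  let d := fresh "TA" in let e := fresh "sA" in
  destruct H as [?H [?H ?H]]; destruct (frame_facts _ _ _ _ ltac:(eassumption) ltac:(eassumption) ltac:(eassumption) Hs) as [a [b [c [d e]]]].

Lemma hA a b sg s : Hyps a b sg -> in_open_int a b s ->
  Ag sg s = vadd (vscal (-1) (sg s)) (vscal (kap sg s) (Ng sg s)).
Proof. intros H Hs. ffacts H Hs.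
 rewrite (frame_dec (sg s) (Tg sg s) (Ag sg s) ss TT sT) at 1.
 replace (vdot (Ag sg s) (sg s)) with (-1) by (rewrite <- sA; unfold vdot; ring).
 replace (vdot (Ag sg s) (Tg sg s)) with 0 by (rewrite <- TA; unfold vdot; ring).
 unfold kap, Ng. vring.
Qed.

Lemma vderN a b sg s : Hyps a b sg -> in_open_int a b s -> vder (Ng sg) s (Nd sg s).
Proof. intros H Hs. assert (HA := hA a b sg s H Hs). ffacts H Hs.
 eapply vder_eq. apply vder_cross; apply vder_sm with a b; auto. apply smT; auto.
 fold (Tg sg) (Ag sg). rewrite HA.
 transitivity (vadd (vscal (kap sg s * vdot (sg s) (Tg sg s)) (sg s)) (vscal (- kap sg s * vdot (sg s) (sg s)) (Tg sg s))).
 unfold Ng; vring. rewrite sT, ss. unfold Nd; vring.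
Qed.

Lemma FP_tau a b sg s c : Hyps a b sg -> in_open_int a b s ->
  tproj (Ng sg s) (vscal c (vadd (vscal (- k1 sg s) (Tg sg s)) (vscal (- kap sg s) (Ag sg s)))) = vscal c (W sg s).
Proof. intros H Hs. assert (HA := hA a b sg s H Hs). ffacts H Hs. rewrite HA.
 transitivity (tproj (vcross (sg s) (Tg sg s)) (vadd (vadd (vscal (c * kap sg s) (sg s)) (vscal (- c * k1 sg s) (Tg sg s)))
   (vscal (- c * kap sg s * kap sg s) (vcross (sg s) (Tg sg s))))).
 unfold Ng; f_equal; vring. rewrite tproj_frame; auto. unfold W; vring.
Qed.

Lemma FP_W a b sg s c : Hyps a b sg -> in_open_int a b s ->
  tproj (Ng sg s) (vscal c (W sg s)) = vscal c (W sg s).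
Proof. intros H Hs. ffacts H Hs.
 transitivity (tproj (vcross (sg s) (Tg sg s)) (vadd (vadd (vscal (c * kap sg s) (sg s)) (vscal (- c * k1 sg s) (Tg sg s)))
   (vscal 0 (vcross (sg s) (Tg sg s))))).
 unfold Ng, W; f_equal; vring. rewrite tproj_frame; auto. unfold W; vring.
Qed.

Lemma FP_U a b sg s c : Hyps a b sg -> in_open_int a b s ->
  tproj (Ng sg s) (vscal c (vadd (vadd (vscal (k1 sg s) (sg s)) (vscal (kap sg s) (Tg sg s)))
     (vadd (vscal (- k2 sg s) (Tg sg s)) (vscal (- k1 sg s) (Ag sg s))))) = vscal c (U sg s).
Proof. intros H Hs. assert (HA := hA a b sg s H Hs). ffacts H Hs. rewrite HA.
 transitivity (tproj (vcross (sg s) (Tg sg s)) (vadd (vadd (vscal (c * (2 * k1 sg s)) (sg s)) (vscal (c * (kap sg s - k2 sg s)) (Tg sg s)))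
   (vscal (- c * k1 sg s * kap sg s) (vcross (sg s) (Tg sg s))))).
 unfold Ng; f_equal; vring. rewrite tproj_frame; auto. unfold U; vring.
Qed.

Lemma FP_Y a b sg s c : Hyps a b sg -> in_open_int a b s ->
  tproj (Ng sg s) (vscal c (vadd (vadd (vscal (2 * k2 sg s) (sg s)) (vscal (2 * k1 sg s) (Tg sg s)))
     (vadd (vscal (k1 sg s - k3 sg s) (Tg sg s)) (vscal (kap sg s - k2 sg s) (Ag sg s))))) = vscal c (Yv sg s).
Proof. intros H Hs. assert (HA := hA a b sg s H Hs). ffacts H Hs. rewrite HA.
 transitivity (tproj (vcross (sg s) (Tg sg s)) (vadd (vadd (vscal (c * (3 * k2 sg s - kap sg s)) (sg s)) (vscal (c * (3 * k1 sg s - k3 sg s)) (Tg sg s)))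
   (vscal (c * (kap sg s - k2 sg s) * kap sg s) (vcross (sg s) (Tg sg s))))).
 unfold Ng; f_equal; vring. rewrite tproj_frame; auto. unfold Yv; vring.
Qed.

Lemma RS_W a b sg s c d : Hyps a b sg -> in_open_int a b s ->
  RS2 (vscal c (Tg sg s)) (vscal d (W sg s)) (vscal c (Tg sg s)) = vscal (- (c * c * d * kap sg s)) (sg s).
Proof. intros H Hs. ffacts H Hs. unfold RS2.
 replace (vdot (vscal d (W sg s)) (vscal c (Tg sg s))) with (- (d * c * k1 sg s)).
 replace (vdot (vscal c (Tg sg s)) (vscal c (Tg sg s))) with (c * c).
 unfold W; vring.
 transitivity (c * c * vdot (Tg sg s) (Tg sg s)). rewrite TT; ring. vunf; ring.
 transitivity (d * c * (kap sg s * vdot (sg s) (Tg sg s) - k1 sg s * vdot (Tg sg s) (Tg sg s))).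
 rewrite TT, sT; ring. unfold W; vunf; ring.
Qed.

Lemma d_id t : is_derive (fun x : R => x) t 1.
Proof. auto_derive; auto. Qed.
Lemma d_sq t : is_derive (fun x => x * x) t (2 * t).
Proof. auto_derive; auto. ring. Qed.
Lemma d_inv2 t : t <> 0 -> is_derive (fun x => / (x * x)) t (-2 / (t * t * t)).
Proof. intros. auto_derive. auto. field. auto. Qed.
Lemma d_m2 t : t <> 0 -> is_derive (fun x => -2 / (x * x * x)) t (6 / (t * t * t * t)).
Proof. intros. auto_derive. auto. field. auto. Qed.
Lemma isd_opp (f : R -> R) x l : is_derive f x l -> is_derive (fun y => - f y) x (- l).
Proof. intros H. exact (is_derive_opp f x l H). Qed.

Lemma X0 sg t s : vpd 0 (cone sg) (t, s) = sg s.
Proof. change (vpd 0 (Sep (fun x => x) sg) (t, s) = sg s). rewrite (vpd0_sep _ _ t s 1 (d_id t)). vring. Qed.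

Lemma X1 a b sg t s : smooth_curve a b sg -> in_open_int a b s -> vpd 1 (cone sg) (t, s) = vscal t (Tg sg s).
Proof. intros H Hs. change (vpd 1 (Sep (fun x => x) sg) (t, s) = vscal t (Tg sg s)).
 apply vpd1_sep. apply vder_sm with a b; auto. Qed.

Section G. End G.

Lemma gvals a b sg t s : Hyps a b sg -> cone_dom a b (t, s) ->
  imetric (cone sg) 0 0 (t, s) = 1 /\ imetric (cone sg) 1 1 (t, s) = t * t /\
  imetric (cone sg) 0 1 (t, s) = 0 /\ imetric (cone sg) 1 0 (t, s) = 0.
Proof. intros H [Ht Hs]. cbn [fst snd] in *. pose proof H as H'. ffacts H' Hs. unfold imetric.
 rewrite X0, (X1 a b); auto.
 split; [|split; [|split]].
 - auto.
 - transitivity (t * t * vdot (Tg sg s) (Tg sg s)). vunf; ring. rewrite TT; ring.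
 - transitivity (t * vdot (sg s) (Tg sg s)). vunf; ring. rewrite sT; ring.
 - transitivity (t * vdot (sg s) (Tg sg s)). vunf; ring. rewrite sT; ring.
Qed.

Lemma gfun a b sg q : Hyps a b sg -> cone_dom a b q ->
  imetric (cone sg) 0 0 q = (fun _ => 1) (fst q) /\ imetric (cone sg) 1 1 q = (fun x => x * x) (fst q) /\
  imetric (cone sg) 0 1 q = (fun _ => 0) (fst q) /\ imetric (cone sg) 1 0 q = (fun _ => 0) (fst q).
Proof. intros H Hq. destruct q as [t s]. apply gvals with a b; auto. Qed.

Lemma pdvals a b sg t s : Hyps a b sg -> cone_dom a b (t, s) ->
  pd 0 (imetric (cone sg) 0 0) (t, s) = 0 /\ pd 1 (imetric (cone sg) 0 0) (t, s) = 0 /\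
  pd 0 (imetric (cone sg) 1 1) (t, s) = 2 * t /\ pd 1 (imetric (cone sg) 1 1) (t, s) = 0 /\
  pd 0 (imetric (cone sg) 0 1) (t, s) = 0 /\ pd 1 (imetric (cone sg) 0 1) (t, s) = 0 /\
  pd 0 (imetric (cone sg) 1 0) (t, s) = 0 /\ pd 1 (imetric (cone sg) 1 0) (t, s) = 0.
Proof. intros H Hp.
 rewrite (pd_ext a b 0 _ (fun q => (fun _ => 1) (fst q))), (pd_ext a b 1 _ (fun q => (fun _ => 1) (fst q))),
   (pd_ext a b 0 (imetric (cone sg) 1 1) (fun q => (fun x => x * x) (fst q))),
   (pd_ext a b 1 (imetric (cone sg) 1 1) (fun q => (fun x => x * x) (fst q))),
   (pd_ext a b 0 (imetric (cone sg) 0 1) (fun q => (fun _ => 0) (fst q))),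
   (pd_ext a b 1 (imetric (cone sg) 0 1) (fun q => (fun _ => 0) (fst q))),
   (pd_ext a b 0 (imetric (cone sg) 1 0) (fun q => (fun _ => 0) (fst q))),
   (pd_ext a b 1 (imetric (cone sg) 1 0) (fun q => (fun _ => 0) (fst q))); auto;
   try (intros q Hq; apply (gfun a b sg q H Hq)).
 cbn [pd fst snd]. rewrite !Derive_const. replace (Derive (fun x => x * x) t) with (2 * t) by (symmetry; apply is_derive_unique; apply d_sq). repeat split.
Qed.

Lemma ivals a b sg t s : Hyps a b sg -> cone_dom a b (t, s) ->
  iinv (cone sg) 0 0 (t, s) = 1 /\ iinv (cone sg) 1 1 (t, s) = / (t * t) /\
  iinv (cone sg) 0 1 (t, s) = 0 /\ iinv (cone sg) 1 0 (t, s) = 0.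
Proof. intros H Hp. destruct (gvals a b sg t s H Hp) as [g00 [g11 [g01 g10]]].
 assert (t <> 0) by (destruct Hp; simpl in *; lra).
 unfold iinv, idet. rewrite g00, g11, g01, g10. repeat split; field; auto.
Qed.

Lemma cvals a b sg t s : Hyps a b sg -> cone_dom a b (t, s) ->
  christ (cone sg) 0 0 0 (t, s) = 0 /\ christ (cone sg) 1 0 0 (t, s) = 0 /\
  christ (cone sg) 0 1 1 (t, s) = - t /\ christ (cone sg) 1 1 1 (t, s) = 0.
Proof. intros H Hp. destruct (gvals a b sg t s H Hp) as [g00 [g11 [g01 g10]]].
 destruct (pdvals a b sg t s H Hp) as [p1 [p2 [p3 [p4 [p5 [p6 [p7 p8]]]]]]].
 assert (t <> 0) by (destruct Hp; simpl in *; lra).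
 unfold christ, sum2, iinv, idet. cbv beta iota.
 rewrite ?g00, ?g11, ?g01, ?g10, ?p1, ?p2, ?p3, ?p4, ?p5, ?p6, ?p7, ?p8. repeat split; field; auto.
Qed.

Lemma gauss_pt a b sg t s : Hyps a b sg -> cone_dom a b (t, s) -> gauss_map (cone sg) (t, s) = Ng sg s.
Proof. intros H [Ht Hs]. cbn [fst snd] in *. pose proof H as H'. ffacts H' Hs.
 unfold gauss_map. rewrite X0, (X1 a b); auto.
 replace (vcross (sg s) (vscal t (Tg sg s))) with (vscal t (Ng sg s)) by (unfold Ng; vring).
 unfold vnorm.
 replace (vdot (vscal t (Ng sg s)) (vscal t (Ng sg s))) with (t * t).
 { rewrite sqrt_square by lra. apply vext; vunf; field; lra. }
 transitivity (t * t * (vdot (sg s) (sg s) * vdot (Tg sg s) (Tg sg s) - vdot (sg s) (Tg sg s) * vdot (sg s) (Tg sg s))).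
 rewrite ss, TT, sT; ring. unfold Ng; vunf; ring.
Qed.

Lemma gauss_fun a b sg q : Hyps a b sg -> cone_dom a b q -> gauss_map (cone sg) q = Sep (fun _ => 1) (Ng sg) q.
Proof. intros H Hq. destruct q as [t s]. rewrite (gauss_pt a b); auto. unfold Sep; cbn [fst snd]. vring. Qed.

Lemma dphi0 a b sg q : Hyps a b sg -> cone_dom a b q -> vpd 0 (gauss_map (cone sg)) q = Sep (fun _ => 0) (Ng sg) q.
Proof. intros H Hq. destruct q as [t s]. rewrite (vpd_ext a b 0 _ (Sep (fun _ => 1) (Ng sg))); auto.
 rewrite (vpd0_sep _ _ t s 0 (isd_const 1 t)). reflexivity.
 intros; apply gauss_fun with a b; auto. Qed.

Lemma dphi1 a b sg q : Hyps a b sg -> cone_dom a b q -> vpd 1 (gauss_map (cone sg)) q = Sep (fun _ => 1) (Nd sg) q.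
Proof. intros H Hq. destruct q as [t s]. rewrite (vpd_ext a b 1 _ (Sep (fun _ => 1) (Ng sg))); auto.
 apply vpd1_sep. apply (vderN a b); auto. destruct Hq; auto.
 intros; apply gauss_fun with a b; auto. Qed.

Lemma vder_Nd a b sg s : Hyps a b sg -> in_open_int a b s ->
  vder (Nd sg) s (vadd (vscal (- k1 sg s) (Tg sg s)) (vscal (- kap sg s) (Ag sg s))).
Proof. intros H Hs. destruct H as [H1 _]. destruct (isd_k a b sg s H1 Hs) as [K1 _].
 apply (vder_scal (fun u => - kap sg u) (Tg sg)). apply isd_opp; auto.
 apply vder_sm with a b; auto. apply smT; auto. Qed.

Lemma ddphi a b sg t s : Hyps a b sg -> cone_dom a b (t, s) ->
  vpd 0 (vpd 0 (gauss_map (cone sg))) (t, s) = vscal 0 (Ng sg s) /\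
  vpd 1 (vpd 1 (gauss_map (cone sg))) (t, s) = vscal 1 (vadd (vscal (- k1 sg s) (Tg sg s)) (vscal (- kap sg s) (Ag sg s))).
Proof. intros H Hp. split.
 - rewrite (vpd_ext a b 0 _ (Sep (fun _ => 0) (Ng sg))); auto.
   rewrite (vpd0_sep _ _ t s 0 (isd_const 0 t)). vring.
   intros; apply dphi0 with a b; auto.
 - rewrite (vpd_ext a b 1 _ (Sep (fun _ => 1) (Nd sg))); auto.
   apply vpd1_sep. apply (vder_Nd a b); auto. destruct Hp; auto.
   intros; apply dphi1 with a b; auto.
Qed.

Lemma tension_pt a b sg t s : Hyps a b sg -> cone_dom a b (t, s) ->
  tension (cone sg) (gauss_map (cone sg)) (t, s) = vscal (/ (t * t)) (W sg s).
Proof. intros H Hp.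
 destruct (ivals a b sg t s H Hp) as [i00 [i11 [i01 i10]]].
 destruct (cvals a b sg t s H Hp) as [c000 [c100 [c011 c111]]].
 destruct (ddphi a b sg t s H Hp) as [dd0 dd1].
 assert (d0 := dphi0 a b sg _ H Hp). assert (d1 := dphi1 a b sg _ H Hp).
 unfold Sep in d0, d1; cbn [fst snd] in d0, d1.
 assert (t <> 0) by (destruct Hp; simpl in *; lra).
 unfold tension, vsum2, pconn. cbv beta.
 rewrite (gauss_pt a b), dd0, dd1, d0, d1, (FP_tau a b); auto; [|destruct Hp; auto].
 rewrite i00, i11, i01, i10, c000, c100, c011, c111.
 vfield. all: auto.
Qed.

Lemma tau_fun a b sg q : Hyps a b sg -> cone_dom a b q ->
  tension (cone sg) (gauss_map (cone sg)) q = Sep (fun x => / (x * x)) (W sg) q.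
Proof. intros H Hq. destruct q as [t s]. rewrite (tension_pt a b); auto. Qed.

Lemma vder_W a b sg s : Hyps a b sg -> in_open_int a b s ->
  vder (W sg) s (vadd (vadd (vscal (k1 sg s) (sg s)) (vscal (kap sg s) (Tg sg s)))
     (vadd (vscal (- k2 sg s) (Tg sg s)) (vscal (- k1 sg s) (Ag sg s)))).
Proof. intros H Hs. destruct H as [H1 _]. destruct (isd_k a b sg s H1 Hs) as [K1 [K2 K3]].
 apply (vder_add (fun u => vscal (kap sg u) (sg u)) (fun u => vscal (- k1 sg u) (Tg sg u))).
 apply vder_scal; auto. apply vder_sm with a b; auto.
 apply (vder_scal (fun u => - k1 sg u) (Tg sg)). apply isd_opp; auto.
 apply vder_sm with a b; auto. apply smT; auto. Qed.

Lemma vder_U a b sg s : Hyps a b sg -> in_open_int a b s ->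
  vder (U sg) s (vadd (vadd (vscal (2 * k2 sg s) (sg s)) (vscal (2 * k1 sg s) (Tg sg s)))
     (vadd (vscal (k1 sg s - k3 sg s) (Tg sg s)) (vscal (kap sg s - k2 sg s) (Ag sg s)))).
Proof. intros H Hs. destruct H as [H1 _]. destruct (isd_k a b sg s H1 Hs) as [K1 [K2 K3]].
 apply (vder_add (fun u => vscal (2 * k1 sg u) (sg u)) (fun u => vscal (kap sg u - k2 sg u) (Tg sg u))).
 apply (vder_scal (fun u => 2 * k1 sg u) sg). apply is_derive_scal; auto. apply vder_sm with a b; auto.
 apply (vder_scal (fun u => kap sg u - k2 sg u) (Tg sg)). apply isd_minus; auto.
 apply vder_sm with a b; auto. apply smT; auto. Qed.

Lemma pc0_fun a b sg q : Hyps a b sg -> cone_dom a b q ->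
  pconn (gauss_map (cone sg)) 0 (tension (cone sg) (gauss_map (cone sg))) q = Sep (fun x => -2 / (x * x * x)) (W sg) q.
Proof. intros H Hq. destruct q as [t s]. assert (t <> 0) by (destruct Hq; simpl in *; lra).
 unfold pconn. rewrite (gauss_pt a b); auto.
 rewrite (vpd_ext a b 0 _ (Sep (fun x => / (x * x)) (W sg))); auto.
 rewrite (vpd0_sep _ _ t s _ (d_inv2 t H0)). rewrite (FP_W a b); auto. destruct Hq; auto.
 intros; apply tau_fun with a b; auto. Qed.

Lemma pc1_fun a b sg q : Hyps a b sg -> cone_dom a b q ->
  pconn (gauss_map (cone sg)) 1 (tension (cone sg) (gauss_map (cone sg))) q = Sep (fun x => / (x * x)) (U sg) q.
Proof. intros H Hq. destruct q as [t s]. assert (Hs : in_open_int a b s) by (destruct Hq; auto).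
 unfold pconn. rewrite (gauss_pt a b); auto.
 rewrite (vpd_ext a b 1 _ (Sep (fun x => / (x * x)) (W sg))); auto.
 rewrite (vpd1_sep _ _ t s _ (vder_W a b sg s H Hs)). rewrite (FP_U a b); auto.
 intros; apply tau_fun with a b; auto. Qed.

Lemma pcc a b sg t s : Hyps a b sg -> cone_dom a b (t, s) ->
  pconn (gauss_map (cone sg)) 0 (pconn (gauss_map (cone sg)) 0 (tension (cone sg) (gauss_map (cone sg)))) (t, s)
   = vscal (6 / (t * t * t * t)) (W sg s) /\
  pconn (gauss_map (cone sg)) 1 (pconn (gauss_map (cone sg)) 1 (tension (cone sg) (gauss_map (cone sg)))) (t, s)
   = vscal (/ (t * t)) (Yv sg s).
Proof. intros H Hp. assert (t <> 0) by (destruct Hp; simpl in *; lra).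
 assert (Hs : in_open_int a b s) by (destruct Hp; auto). split.
 - change (tproj (gauss_map (cone sg) (t, s)) (vpd 0 (pconn (gauss_map (cone sg)) 0 (tension (cone sg) (gauss_map (cone sg)))) (t, s)) = vscal (6 / (t * t * t * t)) (W sg s)).
   rewrite (gauss_pt a b); auto.
   rewrite (vpd_ext a b 0 _ (Sep (fun x => -2 / (x * x * x)) (W sg))); auto.
   rewrite (vpd0_sep _ _ t s _ (d_m2 t H0)). rewrite (FP_W a b); auto.
   intros; apply pc0_fun with a b; auto.
 - change (tproj (gauss_map (cone sg) (t, s)) (vpd 1 (pconn (gauss_map (cone sg)) 1 (tension (cone sg) (gauss_map (cone sg)))) (t, s)) = vscal (/ (t * t)) (Yv sg s)).
   rewrite (gauss_pt a b); auto.
   rewrite (vpd_ext a b 1 _ (Sep (fun x => / (x * x)) (U sg))); auto.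
   rewrite (vpd1_sep _ _ t s _ (vder_U a b sg s H Hs)). rewrite (FP_Y a b); auto.
   intros; apply pc1_fun with a b; auto.
Qed.

Lemma RS_Nd a b sg s d : Hyps a b sg -> in_open_int a b s ->
  RS2 (vscal 1 (Nd sg s)) (vscal d (W sg s)) (vscal 1 (Nd sg s)) = vscal (- (kap sg s * kap sg s * d * kap sg s)) (sg s).
Proof. intros H Hs. replace (vscal 1 (Nd sg s)) with (vscal (- kap sg s) (Tg sg s)) by (unfold Nd; vring).
 rewrite (RS_W a b); auto. f_equal; ring. Qed.

Lemma vs0 v : vscal 0 v = vzero. Proof. vring. Qed.
Lemma va0l v : vadd vzero v = v. Proof. vring. Qed.
Lemma va0r v : vadd v vzero = v. Proof. vring. Qed.
Lemma vsub0 v : vsub v vzero = v. Proof. vring. Qed.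
Lemma RS0 y : RS2 vzero y vzero = vzero. Proof. vring. Qed.

Lemma bitension_pt a b sg t s : Hyps a b sg -> cone_dom a b (t, s) ->
  bitension (cone sg) (gauss_map (cone sg)) (t, s) =
  vscal (/ (t * t * t * t)) (vadd (vscal (3 * kap sg s + 3 * k2 sg s + kap sg s * kap sg s * kap sg s) (sg s))
      (vscal (- (k1 sg s + k3 sg s)) (Tg sg s))).
Proof. intros H Hp. assert (t <> 0) by (destruct Hp; simpl in *; lra).
 assert (Hs : in_open_int a b s) by (destruct Hp; auto).
 destruct (ivals a b sg t s H Hp) as [i00 [i11 [i01 i10]]].
 destruct (cvals a b sg t s H Hp) as [c000 [c100 [c011 c111]]].
 destruct (pcc a b sg t s H Hp) as [p00 p11].
 assert (q0 := pc0_fun a b sg _ H Hp). assert (q1 := pc1_fun a b sg _ H Hp).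
 assert (d0 := dphi0 a b sg _ H Hp). assert (d1 := dphi1 a b sg _ H Hp).
 unfold Sep in q0, q1, d0, d1; cbn [fst snd] in q0, q1, d0, d1.
 unfold bitension, trace_hess, vsum2. cbv beta.
 rewrite p00, p11, q0, q1, (tension_pt a b), d0, d1, (RS_Nd a b); auto.
 rewrite i00, i11, i01, i10, c000, c100, c011, c111.
 repeat rewrite ?vs0, ?va0l, ?va0r, ?vsub0, ?RS0.
 unfold W, Yv, U. vfield. all: auto.
Qed.

Lemma cube_inj x y : x * x * x = y * y * y -> x = y.
Proof. intros E. destruct (Req_dec x y) as [|N]; auto.
 assert (x * x + x * y + y * y = 0).
 { apply Rmult_eq_reg_l with (x - y). rewrite Rmult_0_r. transitivity (x*x*x - y*y*y). ring. lra. lra. }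
 exfalso. assert (h1 := Rle_0_sqr (x + y / 2)). assert (h2 := Rle_0_sqr y). unfold Rsqr in *.
 assert (y * y = 0) by nra. assert (y = 0) by nra. subst. assert (x * x = 0) by nra. assert (x = 0) by nra. lra. Qed.

Lemma ode a b sg : Hyps a b sg ->
  (forall s, in_open_int a b s -> k3 sg s + k1 sg s = 0) ->
  (forall s, in_open_int a b s -> 3 * kap sg s + 3 * k2 sg s + kap sg s * kap sg s * kap sg s = 0) ->
  forall s, in_open_int a b s -> kap sg s = 0 /\ k1 sg s = 0.
Proof. intros H E1 E2.
 assert (K : forall s, in_open_int a b s -> is_derive (kap sg) s (k1 sg s) /\ is_derive (k1 sg) s (k2 sg s) /\ is_derive (k2 sg) s (k3 sg s)).
 { intros s Hs; destruct H as [H1 _]; apply isd_k with a b; auto. }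
 assert (Dc : forall s, in_open_int a b s -> is_derive (fun u => kap sg u * kap sg u * kap sg u) s
    (3 * (kap sg s * kap sg s * k1 sg s))).
 { intros s Hs. destruct (K s Hs) as [K1 _]. eapply isd_eq. apply isd_mult. apply isd_mult. exact K1. exact K1. exact K1.
   cbv beta; req; ring. }
 assert (G1 : forall s, in_open_int a b s -> kap sg s * kap sg s * k1 sg s = 0).
 { intros s Hs. destruct (K s Hs) as [K1 [K2 K3]].
   assert (L : is_derive (fun u => 3 * kap sg u + 3 * k2 sg u + kap sg u * kap sg u * kap sg u) s
      (3 * k1 sg s + 3 * k3 sg s + 3 * (kap sg s * kap sg s * k1 sg s))).
   { apply isd_plus. apply isd_plus. apply is_derive_scal; auto. apply is_derive_scal; auto. apply Dc; auto. }
   assert (L0 := deriv0 a b _ 0 s _ Hs E2 L). assert (E := E1 s Hs). nra. }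
 assert (Cst : forall x y, in_open_int a b x -> in_open_int a b y -> kap sg x = kap sg y).
 { assert (Hlt : forall x y, in_open_int a b x -> in_open_int a b y -> x < y -> kap sg x = kap sg y).
   { intros x y Hx Hy Hxy. apply cube_inj.
     apply (eq_is_derive (fun u => kap sg u * kap sg u * kap sg u) x y); auto.
     intros u Hu. assert (Hu' : in_open_int a b u).
     { destruct Hx as [Hx1 _], Hy as [_ Hy2]. split.
       - destruct a; simpl in *; auto; lra.
       - destruct b; simpl in *; auto; lra. }
     eapply isd_eq. apply Dc; auto. rewrite G1; auto. rewrite Rmult_0_r. reflexivity. }
   intros x y Hx Hy. destruct (Rtotal_order x y) as [|[|]]; subst; auto. symmetry; auto. }
 assert (Z1 : forall s, in_open_int a b s -> k1 sg s = 0).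
 { intros s Hs. destruct (K s Hs) as [K1 _]. apply (deriv0 a b (kap sg) (kap sg s) s); auto.
   }
 intros s Hs. split; auto.
 assert (Z2 : k2 sg s = 0).
 { destruct (K s Hs) as [_ [K2 _]]. apply (deriv0 a b (k1 sg) 0 s); auto. }
 assert (E := E2 s Hs). rewrite Z2 in E. nra.
Qed.

Theorem theorem4p4 (a b : Rbar) (sigma : R -> vec3) :
  Rbar_lt a b ->
  smooth_curve a b sigma ->
  (forall s, in_open_int a b s -> vnorm (sigma s) = 1) ->
  (forall s, in_open_int a b s -> vnorm (vderiv sigma s) = 1) ->
  ~ proper_biharmonic (cone_dom a b) (cone sigma) (gauss_map (cone sigma)).
Proof.
 intros hab Hsm Hn1 Hn2 [Hbi Hnh]. apply Hnh.
 assert (H : Hyps a b sigma) by (split; auto).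
 assert (EQ : forall s, in_open_int a b s ->
   (3 * kap sigma s + 3 * k2 sigma s + kap sigma s * kap sigma s * kap sigma s = 0) /\ k3 sigma s + k1 sigma s = 0).
 { intros s Hs. assert (Hp : cone_dom a b (1, s)) by (split; simpl; auto; lra).
   assert (B := Hbi _ Hp). rewrite (bitension_pt a b) in B; auto.
   destruct (frame_facts a b sigma s Hsm Hn1 Hn2 Hs) as [ss [TT [sT _]]].
   assert (B1 := f_equal (fun v => vdot v (sigma s)) B). assert (B2 := f_equal (fun v => vdot v (Tg sigma s)) B).
   cbv beta in B1, B2.
   set (e1 := 3 * kap sigma s + 3 * k2 sigma s + kap sigma s * kap sigma s * kap sigma s) in *.
   set (e2 := - (k1 sigma s + k3 sigma s)) in *.
   replace (vdot (vscal (/ (1 * 1 * 1 * 1)) (vadd (vscal e1 (sigma s)) (vscal e2 (Tg sigma s)))) (sigma s))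
     with (/ (1 * 1 * 1 * 1) * (e1 * vdot (sigma s) (sigma s) + e2 * vdot (sigma s) (Tg sigma s))) in B1 by (vunf; ring).
   replace (vdot (vscal (/ (1 * 1 * 1 * 1)) (vadd (vscal e1 (sigma s)) (vscal e2 (Tg sigma s)))) (Tg sigma s))
     with (/ (1 * 1 * 1 * 1) * (e1 * vdot (sigma s) (Tg sigma s) + e2 * vdot (Tg sigma s) (Tg sigma s))) in B2 by (vunf; ring).
   replace (vdot vzero (sigma s)) with 0 in B1 by (vunf; ring).
   replace (vdot vzero (Tg sigma s)) with 0 in B2 by (vunf; ring).
   rewrite ss, sT in B1. rewrite sT, TT in B2.
   replace (/ (1 * 1 * 1 * 1)) with 1 in B1, B2 by field.
   unfold e2 in B2. split; lra. }
 assert (Z := ode a b sigma H (fun s Hs => proj2 (EQ s Hs)) (fun s Hs => proj1 (EQ s Hs))).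
 intros [t s] Hp. rewrite (tension_pt a b); auto.
 destruct (Z s) as [Z1 Z2]. destruct Hp; auto.
 unfold W. rewrite Z1, Z2. vring.
Qed.
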